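(* Let $G=(Q\cup S,E)$ be a split graph, where $Q$ is a clique, $S$ is a stable set, $Q\cap S=\emptyset$, and $Q$ is a maximal clique of $G$ (not contained in any larger clique). Let $T\subseteq Q$ be a non-empty set such that the degrees in $G$ of the vertices of $T$ are pairwise different. Then $\eta(G)\leq |Q|-|T|+1$.
   Context: All graphs are finite, simple and undirected. A graph is split if its vertex set can be partitioned into a clique and a stable set. For a vertex $v$, $N(v)$ is its set of neighbours and $d(v)=|N(v)|$ its degree. For a positive integer $k$, $[k]=\{1,\dots,k\}$. For a labeling $f:V(G)\to[k]$ and $S'\subseteq V(G)$, $f(S')=\sum_{u\in S'}f(u)$. A labeling $f:V(G)\to[k]$ is an additive $k$-coloring if $f(N(u))\neq f(N(v))$ for every edge $(u,v)$ of $G$. The additive chromatic number $\eta(G)$ is the least $k$ for which $G$ has an additive $k$-coloring. *)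

(* Defs.v *)
From mathcomp Require Import all_boot all_order.
Set Implicit Arguments. Unset Strict Implicit. Unset Printing Implicit Defensive.

(* A finite simple graph on a finType V is given by an adjacency relation
   e : rel V, assumed symmetric and irreflexive in the theorem. *)
Section Graphs.
Variables (V : finType) (e : rel V).

Definition nbhd (v : V) : {set V} := [set u | e v u].
Definition deg (v : V) : nat := #|nbhd v|.

Definition is_clique (C : {set V}) : Prop :=
  {in C &, forall u v, u != v -> e u v}.
Definition is_stable (S : {set V}) : Prop :=
  {in S &, forall u v, ~~ e u v}.
Definition is_maximal_clique (Q : {set V}) : Prop :=
  is_clique Q /\ forall C : {set V}, is_clique C -> Q \subset C -> C = Q.

Definition lsum (f : V -> nat) (A : {set V}) : nat := \sum_(u in A) f u.

Definition additive_coloring (k : nat) (f : V -> nat) : Prop :=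
  (forall v, 1 <= f v <= k) /\
  (forall u v, e u v -> lsum f (nbhd u) <> lsum f (nbhd v)).

Definition has_additive (k : nat) : bool :=
  [exists g : {ffun V -> 'I_k},
    [forall u, forall v, e u v ==>
      (\sum_(w in nbhd u) (g w).+1 != \sum_(w in nbhd v) (g w).+1)]].

(* eta(G): least k >= 1 admitting an additive k-coloring.  Such a k always
   exists below 2^#|V| + 1 (labels 2^i), so the bounded minimum is exact. *)
Definition eta : nat :=
  \big[minn/(2 ^ #|V|).+1]_(1 <= k < (2 ^ #|V|).+1 | has_additive k) k.
End Graphs.

(* Main.v *)
Require Import Defs.
From mathcomp Require Import all_boot all_order.
From mathcomp Require Import zify.
Set Implicit Arguments.

Lemma eta_le (V : finType) (e : rel V) k :
  1 <= k < (2 ^ #|V|).+1 -> has_additive e k -> eta e <= k.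
Proof.
move=> /andP[k1 kM] Hk; rewrite /eta.
have : k \in index_iota 1 (2 ^ #|V|).+1 by rewrite mem_index_iota k1 kM.
elim: (index_iota _ _) => // x r IH; rewrite inE big_cons => /orP[/eqP<-|kr].
  by rewrite Hk geq_minl.
case: ifP => _; last exact: IH.
by rewrite geq_min IH ?orbT.
Qed.

Lemma has_add_of (V : finType) (e : rel V) k (f : V -> nat) :
  (forall v, 0 < f v <= k) ->
  (forall u v, e u v -> lsum f (nbhd e u) != lsum f (nbhd e v)) ->
  has_additive e k.
Proof.
move=> Hf He; apply/existsP.
have Hlt v : (f v).-1 < k by have := Hf v; lia.
exists [ffun v => Ordinal (Hlt v)].
apply/forallP=> u; apply/forallP=> v; apply/implyP=> euv.
have Ef w : (([ffun v => Ordinal (Hlt v)] w : nat).+1 = f w).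
  by rewrite ffunE /=; have := Hf w; lia.
rewrite (eq_bigr _ (fun w _ => Ef w)) (eq_bigr _ (fun w _ => Ef w)).
exact: He.
Qed.

Section Main.
Variables (V : finType) (e : rel V).
Hypotheses (e_sym : symmetric e) (e_irr : irreflexive e).
Variables (Q S T : {set V}).
Hypotheses (QS_cover : Q :|: S = [set: V]) (QS_disj : Q :&: S = set0)
  (Q_maxclique : is_maximal_clique e Q) (S_stable : is_stable e S)
  (T_sub : T \subset Q) (T_ne : T != set0)
  (T_deg : {in T &, injective (deg e)}).

Definition kk := #|Q| - #|T| + 1.

Lemma SC x : (x \in S) = (x \notin Q).
Proof.
have : x \in Q :|: S by rewrite QS_cover inE.
rewrite inE; case xQ: (x \in Q) => //= _.
apply/negP => xS; have : x \in Q :&: S by rewrite inE xQ.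
by rewrite QS_disj inE.
Qed.

Definition CC u := [set w in Q | deg e w == deg e u].
Definition rk u := #|[set w in CC u | enum_rank w < enum_rank u]|.

Lemma rk_lt u : u \in Q -> rk u < #|CC u|.
Proof.
move=> uQ; rewrite /rk; apply: proper_card; apply/properP; split.
  by apply/subsetP => w; rewrite inE => /andP[].
by exists u; rewrite !inE ?uQ ?eqxx ?ltnn ?andbF.
Qed.

Lemma C_card u : #|CC u| <= kk.
Proof.
have h1 : #|CC u :&: T| <= 1.
  case: (set_0Vmem (CC u :&: T)) => [->|[x xI]]; first by rewrite cards0.
  rewrite -(cards1 x); apply: subset_leq_card; apply/subsetP => y yI.
  move: xI yI; rewrite !inE => /andP[/andP[xQ /eqP dx] xT] /andP[/andP[yQ /eqP dy] yT].
  by apply/eqP; apply: T_deg => //; rewrite dx dy.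
have h2 : #|CC u :\: T| <= #|Q :\: T|.
  apply: subset_leq_card; apply: setSD; apply/subsetP=> w; rewrite inE => /andP[] //.
have h3 : #|Q :\: T| = #|Q| - #|T|.
  by rewrite cardsD (setIidPr T_sub).
rewrite /kk -(cardsID T (CC u)); lia.
Qed.

Lemma rk_mono u v : u \in Q -> deg e u = deg e v -> enum_rank u < enum_rank v -> rk u < rk v.
Proof.
move=> uQ duv ltuv; have CE : CC u = CC v by apply/setP=> w; rewrite !inE duv.
rewrite /rk CE; apply: proper_card; apply/properP; split.
  apply/subsetP=> w; rewrite !inE => /andP[-> h] /=; exact: ltn_trans h ltuv.
by exists u; rewrite !inE ?uQ ?duv ?eqxx ?ltuv ?ltnn ?andbF.
Qed.

Lemma rk_inj u v : u \in Q -> v \in Q -> deg e u = deg e v -> u != v -> rk u != rk v.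
Proof.
move=> uQ vQ d neq; case: (ltngtP (enum_rank u) (enum_rank v)) => h.
- by rewrite neq_ltn rk_mono.
- by rewrite neq_ltn (rk_mono vQ (esym d) h) ?orbT.
- have : u = v by apply: enum_rank_inj; apply: val_inj.
  by move/eqP; rewrite (negbTE neq).
Qed.

Definition f v := if v \in Q then (rk v).+1 else kk.

Lemma f_bound v : 0 < f v <= kk.
Proof.
rewrite /f; case: ifP => vQ.
  by have := rk_lt vQ; have := C_card v; lia.
rewrite /kk; lia.
Qed.

Lemma lsum_split (A : {set V}) : lsum f A = lsum f (A :&: Q) + #|A :\: Q| * kk.
Proof.
rewrite /lsum (big_setID Q) /=; congr (_ + _).
rewrite -sum_nat_const; apply: eq_bigr => w; rewrite inE => /andP[].
by rewrite /f => /negbTE ->.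
Qed.

Lemma lsum_sub (A B : {set V}) : A \subset B -> lsum f A <= lsum f B.
Proof.
move=> AB; rewrite /lsum [X in _ <= X](big_setID A) /=.
have -> : B :&: A = A by apply/setIidPr.
exact: leq_addr.
Qed.

Lemma nbhdQ u : u \in Q -> nbhd e u :&: Q = Q :\ u.
Proof.
move=> uQ; apply/setP=> w; rewrite !inE.
case: (eqVneq w u) => [->|wu] /=; first by rewrite e_irr.
case wQ: (w \in Q); rewrite ?andbF ?andbT //.
by apply: Q_maxclique.1 => //; rewrite eq_sym.
Qed.

Lemma sumQ u : u \in Q -> lsum f (nbhd e u) + f u = lsum f Q + #|nbhd e u :\: Q| * kk.
Proof.
move=> uQ; rewrite lsum_split nbhdQ // /lsum (big_setD1 u uQ) /=; lia.
Qed.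

Lemma degQ u : u \in Q -> deg e u + 1 = #|Q| + #|nbhd e u :\: Q|.
Proof.
move=> uQ; rewrite /deg -(cardsID Q (nbhd e u)) nbhdQ // [#|Q|](cardsD1 u Q) uQ; lia.
Qed.

Lemma S_nbhd v : v \in S -> nbhd e v \subset Q.
Proof.
move=> vS; apply/subsetP=> w; rewrite inE => evw.
apply: contraT => wnQ; have wS : w \in S by rewrite SC.
by have := S_stable vS wS; rewrite evw.
Qed.

Lemma S_miss v : v \in S -> exists2 w, w \in Q & ~~ e v w.
Proof.
move=> vS; case: (boolP [exists w in Q, ~~ e v w]) => [/exists_inP//|].
rewrite negb_exists_in => /forall_inP H; exfalso.
have cl : is_clique e (v |: Q).
  move=> x y; rewrite !inE => /orP[/eqP->|xQ] /orP[/eqP->|yQ] xy.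
  - by rewrite eqxx in xy.
  - exact/negPn/H.
  - rewrite e_sym; exact/negPn/H.
  - exact: Q_maxclique.1.
have hE := Q_maxclique.2 _ cl (subsetUr _ _).
have vQ : v \in Q by rewrite -hE setU11.
have : v \in Q :&: S by rewrite inE vQ vS.
by rewrite QS_disj inE.
Qed.

Lemma sumS v : v \in S -> exists2 w, w \in Q & lsum f (nbhd e v) + f w <= lsum f Q.
Proof.
move=> vS; case: (S_miss vS) => w wQ nevw; exists w => //.
have sub : nbhd e v \subset Q :\ w.
  apply/subsetP => x xN; rewrite !inE (subsetP (S_nbhd vS) x xN) andbT.
  apply/eqP => xw; move: xN; rewrite xw inE => ew; by rewrite ew in nevw.
have := lsum_sub sub; rewrite /lsum (big_setD1 w wQ) /=; lia.
Qed.

Lemma QS_lt u v : u \in Q -> v \in S -> e u v -> lsum f (nbhd e v) < lsum f (nbhd e u).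
Proof.
move=> uQ vS euv.
have a1 : 0 < #|nbhd e u :\: Q|.
  by rewrite card_gt0; apply/set0Pn; exists v; rewrite !inE euv -SC vS.
have := sumQ uQ; case: (sumS vS) => w wQ h.
have : kk <= #|nbhd e u :\: Q| * kk by rewrite leq_pmull.
have := f_bound u; have := f_bound w; lia.
Qed.

Lemma QQ_ne u v : u \in Q -> v \in Q -> u != v -> lsum f (nbhd e u) != lsum f (nbhd e v).
Proof.
move=> uQ vQ uv.
have su := sumQ uQ; have sv := sumQ vQ; have du := degQ uQ; have dv := degQ vQ.
have fu := f_bound u; have fv := f_bound v.
case: (ltngtP #|nbhd e u :\: Q| #|nbhd e v :\: Q|) => h.
- have : (#|nbhd e u :\: Q|).+1 * kk <= #|nbhd e v :\: Q| * kk := leq_mul h (leqnn kk).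
  rewrite mulSnr; lia.
- have : (#|nbhd e v :\: Q|).+1 * kk <= #|nbhd e u :\: Q| * kk := leq_mul h (leqnn kk).
  rewrite mulSnr; lia.
- have d : deg e u = deg e v by lia.
  have /eqP r := rk_inj uQ vQ d uv.
  move: su sv; rewrite /f uQ vQ; lia.
Qed.

Lemma edges u v : e u v -> lsum f (nbhd e u) != lsum f (nbhd e v).
Proof.
move=> euv; case uQ: (u \in Q); case vQ: (v \in Q).
- by apply: QQ_ne => //; apply/eqP => uv; rewrite uv e_irr in euv.
- have vS : v \in S by rewrite SC vQ.
  by rewrite neq_ltn (QS_lt uQ vS euv) orbT.
- have uS : u \in S by rewrite SC uQ.
  by rewrite e_sym in euv; rewrite neq_ltn (QS_lt vQ uS euv).
- have uS : u \in S by rewrite SC uQ.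
  have vS : v \in S by rewrite SC vQ.
  by have := S_stable uS vS; rewrite euv.
Qed.

Lemma main_sec : eta e <= #|Q| - #|T| + 1.
Proof.
apply: eta_le; last first.
  exact: (@has_add_of V e _ f f_bound edges).
have : 0 < #|T| by rewrite card_gt0.
have := max_card Q; have := ltn_expl #|V| (ltnSn 1); lia.
Qed.
End Main.

Theorem mainTheorem9 (V : finType) (e : rel V)
  (e_sym : symmetric e) (e_irr : irreflexive e)
  (Q S T : {set V})
  (QS_cover : Q :|: S = [set: V]) (QS_disj : Q :&: S = set0)
  (Q_maxclique : is_maximal_clique e Q) (S_stable : is_stable e S)
  (T_sub : T \subset Q) (T_ne : T != set0)
  (T_deg : {in T &, injective (deg e)}) :
  eta e <= #|Q| - #|T| + 1.
Proof.
exact: (main_sec e_sym e_irr QS_cover QS_disj Q_maxclique S_stable T_sub T_ne T_deg).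
Qed.
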